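(* Let $\mathsf F$ be a $\Gamma$-graded field, $\varepsilon\in\Gamma_{\mathsf F}$, and $\Phi=(\mathsf V,q,b)$ an $\varepsilon$-shifted quadratic space over $\mathsf F$ of type $T\in\{I,II,\tau\text{-}III\}$ ($\tau\in\mathsf F_\varepsilon\setminus\{0\}$). For $\Lambda\in\Gamma/\Gamma_{\mathsf F}$ let $\Phi_\Lambda=(\mathsf V_\Lambda,q|_{\mathsf V_\Lambda},b|_{\mathsf V_\Lambda})$, and for an orbit $P=\{\Lambda,\bar\Lambda\}$ of the involution $[\gamma]\mapsto[\bar\gamma]$ on $(\Gamma/\Gamma_{\mathsf F})\setminus(\frac12\Gamma_{\mathsf F}/\Gamma_{\mathsf F})$ let $\Phi_P$ be the restriction of $\Phi$ to $\mathsf V_\Lambda+\mathsf V_{\bar\Lambda}$. Then $$\Phi=\Big(\mathop{\perp}_{\Lambda\in\frac12\Gamma_{\mathsf F}/\Gamma_{\mathsf F}}\Phi_\Lambda\Big)\perp\Psi,\qquad\Psi=\mathop{\perp}_{P}\Phi_P,$$ where $\Psi$ and all $\Phi_\Lambda$ ($\Lambda\in\frac12\Gamma_{\mathsf F}/\Gamma_{\mathsf F}$) are $\varepsilon$-shifted spaces of type $T$, and $\Psi$ is metabolic.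
   Context: $\Gamma$ is a divisible torsion-free abelian group; $\mathsf F=\bigoplus\mathsf F_\gamma$ a $\Gamma$-graded field (graded commutative ring, nonzero homogeneous elements invertible), $\Gamma_{\mathsf F}=\{\gamma:\mathsf F_\gamma\ne0\}$, $\frac12\Gamma_{\mathsf F}=\{\gamma:2\gamma\in\Gamma_{\mathsf F}\}$. For $\gamma\in\Gamma$: $[\gamma]=\gamma+\Gamma_{\mathsf F}$, $\mathsf V_{[\gamma]}=\bigoplus_{\delta\in\Gamma_{\mathsf F}}\mathsf V_{\gamma+\delta}$, $\bar\gamma=-(\gamma+\varepsilon)$; since $\varepsilon\in\Gamma_{\mathsf F}$, $[\gamma]=[\bar\gamma]$ for $\gamma\in\frac12\Gamma_{\mathsf F}$ and the involution has no fixed points outside $\frac12\Gamma_{\mathsf F}/\Gamma_{\mathsf F}$. An $\varepsilon$-shifted quadratic space is $(\mathsf V,q,b)$ with $\mathsf V$ a finite-dimensional graded $\mathsf F$-vector space, $q$ a graded quadratic form ($q(\lambda x)=\lambda^2q(x)$, polar form $b_q$ $0$-shifted bilinear, $q(\mathsf V_\gamma)\subset\mathsf F_{2\gamma}$), $b$ a nondegenerate symmetric bilinear form with $b(\mathsf V_\gamma,\mathsf V_\delta)\subset\mathsf F_{\gamma+\delta+\varepsilon}$, and $b_q=\lambda b$ for some $\lambda\in\mathsf F$. Types: $I$: $\varepsilon=0$, $b=b_q$ (or $\mathsf V=0$); $II$: $q$ totally singular ($q(x+y)=q(x)+q(y)$) and $b$ alternating; $\tau$-$III$: $q(x)=\tau^{-1}b(x,x)$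 for all $x$. Metabolic: there is a graded subspace $\mathsf L$ with $\dim\mathsf L=\frac12\dim\mathsf V$ and $q(\mathsf L)=0=b(\mathsf L,\mathsf L)$. Orthogonal sums are with respect to $b$. *)

(* Defs.v *)
(* Graded fields / graded vector spaces / epsilon-shifted
   quadratic spaces, modelled internally: a Gamma-grading is a family of
   Prop-valued predicates (homogeneous components) forming a direct sum. *)
From HB Require Import structures.
From mathcomp Require Import all_boot all_order all_algebra.
From Stdlib Require List.
Set Implicit Arguments. Unset Strict Implicit. Unset Printing Implicit Defensive.
Import Order.TTheory GRing.Theory.
Local Open Scope ring_scope.

(* W is the internal direct sum of the pieces U i (i with J i), where two
   indices i, j with [same i j] denote the same piece. *)
Definition dsum (V : zmodType) (W : V -> Prop) (I : Type) (J : I -> Prop)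
    (same : I -> I -> Prop) (U : I -> V -> Prop) : Prop :=
  (forall i x, J i -> U i x -> W x) /\
  (forall x, W x -> exists s : seq (I * V),
       List.Forall (fun p => J p.1 /\ U p.1 p.2) s /\ x = \sum_(p <- s) p.2) /\
  (forall s : seq (I * V),
       List.Forall (fun p => J p.1 /\ U p.1 p.2) s ->
       List.ForallOrdPairs (fun p p' => ~ same p.1 p'.1) s ->
       \sum_(p <- s) p.2 = 0 -> List.Forall (fun p => p.2 = 0) s).

Definition orth_sum (V : zmodType) (R : zmodType) (b : V -> V -> R)
    (W : V -> Prop) (I : Type) (J : I -> Prop)
    (same : I -> I -> Prop) (U : I -> V -> Prop) : Prop :=
  dsum W J same U /\
  (forall i j x y, J i -> J j -> ~ same i j -> U i x -> U j y -> b x y = 0).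

Definition divisible_torsion_free (G : zmodType) : Prop :=
  (forall (n : nat) (g : G), (0 < n)%N -> g *+ n = 0 -> g = 0) /\
  (forall (n : nat) (g : G), (0 < n)%N -> exists h : G, h *+ n = g).

Definition graded_field (G : zmodType) (F : comUnitRingType)
    (Fg : G -> F -> Prop) : Prop :=
  (forall g, Fg g 0) /\
  (forall g a c, Fg g a -> Fg g c -> Fg g (a - c)) /\
  Fg 0 1 /\
  (forall g h a c, Fg g a -> Fg h c -> Fg (g + h) (a * c)) /\
  dsum (fun _ : F => True) (fun _ : G => True) eq Fg /\
  (forall g a, Fg g a -> a != 0 -> a \is a GRing.unit).

Section Graded.
Variables (G : zmodType) (F : comUnitRingType) (Fg : G -> F -> Prop).

Definition GammaF (g : G) : Prop := exists a : F, Fg g a /\ a != 0.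
Definition halfGammaF (g : G) : Prop := GammaF (g *+ 2).
Definition same_coset (g h : G) : Prop := GammaF (h - g).

Variable (V : lmodType F) (Vg : G -> V -> Prop).

Definition graded_space : Prop :=
  (forall g, Vg g 0) /\
  (forall g x y, Vg g x -> Vg g y -> Vg g (x - y)) /\
  (forall g h a x, Fg g a -> Vg h x -> Vg (g + h) (a *: x)) /\
  dsum (fun _ : V => True) (fun _ : G => True) eq Vg.

Definition homogeneous (x : V) : Prop := exists g, Vg g x.

Definition graded_subspace (W : V -> Prop) : Prop :=
  W 0 /\ (forall a x y, W x -> W y -> W (a *: x + y)) /\
  (forall x, W x -> exists s : seq (G * V),
       List.Forall (fun p => Vg p.1 p.2 /\ W p.2) s /\ x = \sum_(p <- s) p.2).

Definition graded_basis (W : V -> Prop) (s : seq V) : Prop :=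
  List.Forall (fun x => homogeneous x /\ W x) s /\
  (forall c : 'I_(size s) -> F,
      \sum_(i < size s) c i *: s`_i = 0 -> forall i, c i = 0) /\
  (forall x, W x -> exists c : 'I_(size s) -> F,
      x = \sum_(i < size s) c i *: s`_i).

Definition has_dim (W : V -> Prop) (n : nat) : Prop :=
  exists s, graded_basis W s /\ size s = n.

Definition fin_dim (W : V -> Prop) : Prop := exists n, has_dim W n.

Definition Vcoset (g : G) (x : V) : Prop :=
  exists s : seq (G * V),
    List.Forall (fun p => same_coset g p.1 /\ Vg p.1 p.2) s /\
    x = \sum_(p <- s) p.2.

Variable (eps : G).

Definition gbar (g : G) : G := - (g + eps).

Variables (q : V -> F) (b : V -> V -> F).

Definition polar (x y : V) : F := q (x + y) - q x - q y.

Definition eps_quad_space (W : V -> Prop) : Prop :=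
  graded_subspace W /\ fin_dim W /\
  (forall a x, W x -> q (a *: x) = a ^+ 2 * q x) /\
  (forall a x y z, W x -> W y -> W z ->
      polar (a *: x + y) z = a * polar x z + polar y z) /\
  (forall g h x y, W x -> W y -> Vg g x -> Vg h y -> Fg (g + h) (polar x y)) /\
  (forall g x, W x -> Vg g x -> Fg (g *+ 2) (q x)) /\
  (forall a x y z, W x -> W y -> W z -> b (a *: x + y) z = a * b x z + b y z) /\
  (forall x y, W x -> W y -> b x y = b y x) /\
  (forall g h x y, W x -> W y -> Vg g x -> Vg h y -> Fg (g + h + eps) (b x y)) /\
  (forall x, W x -> (forall y, W y -> b x y = 0) -> x = 0) /\
  (exists lam : F, forall x y, W x -> W y -> polar x y = lam * b x y).

Definition metabolic (W : V -> Prop) : Prop :=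
  exists L : V -> Prop,
    graded_subspace L /\ (forall x, L x -> W x) /\
    (exists n m, has_dim W n /\ has_dim L m /\ (m * 2)%N = n) /\
    (forall x, L x -> q x = 0) /\ (forall x y, L x -> L y -> b x y = 0).

End Graded.

Inductive qtype (F : Type) : Type := TypeI | TypeII | TypeIII of F.
Arguments TypeI {F}. Arguments TypeII {F}.

Definition of_type (G : zmodType) (F : comUnitRingType) (V : lmodType F)
    (eps : G) (q : V -> F) (b : V -> V -> F) (T : qtype F)
    (W : V -> Prop) : Prop :=
  match T with
  | TypeI => (eps = 0 /\ forall x y, W x -> W y -> b x y = polar q x y)
             \/ (forall x, W x -> x = 0)
  | TypeII => (forall x y, W x -> W y -> q (x + y) = q x + q y) /\
              (forall x, W x -> b x x = 0)
  | TypeIII tau => forall x, W x -> q x = tau^-1 * b x x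
  end.

(* Main.v *)
Require Import Defs.
From HB Require Import structures.
From mathcomp Require Import all_boot all_order all_algebra.
From Stdlib Require List.
From Stdlib Require Import ClassicalEpsilon.
From mathcomp Require Import ring.
From Stdlib Require Import FunctionalExtensionality PropExtensionality.
Set Implicit Arguments. Unset Strict Implicit. Unset Printing Implicit Defensive.
Import Order.TTheory GRing.Theory.
Local Open Scope ring_scope.

Definition pb (P : Prop) : bool := if excluded_middle_informative P then true else false.
Lemma pbP (P : Prop) : reflect P (pb P).
Proof. rewrite /pb; case: excluded_middle_informative => h; by constructor. Qed.
Lemma pbE (P : Prop) : pb P = true <-> P.
Proof. by split => [/pbP|/pbP]. Qed.

Lemma ForallP (T : eqType) (P : T -> Prop) (s : seq T) :
  List.Forall P s <-> forall x, x \in s -> P x.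
Proof.
elim: s => [|a s IH]; first by split => // _; constructor.
split.
- move=> h; inversion h; subst => x; rewrite in_cons => /orP [/eqP ->|] //.
  by move: x; apply/IH.
- move=> h; constructor; first by apply: h; rewrite mem_head.
  by apply/IH => x xs; apply: h; rewrite in_cons xs orbT.
Qed.

Section Comp.
Variables (G : zmodType) (V : zmodType) (U : G -> V -> Prop).
Hypothesis U0 : forall g, U g 0.
Hypothesis UB : forall g x y, U g x -> U g y -> U g (x - y).
Hypothesis Ud : dsum (fun _ => True) (fun _ => True) eq U.

Lemma UN g x : U g x -> U g (- x).
Proof. by move=> h; rewrite -sub0r; apply: UB. Qed.
Lemma UD g x y : U g x -> U g y -> U g (x + y).
Proof. by move=> hx hy; rewrite -[y]opprK; apply: UB => //; apply: UN. Qed.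
Lemma Usum (T : eqType) (r : seq T) (P : pred T) g (f : T -> V) :
  (forall i, i \in r -> P i -> U g (f i)) -> U g (\sum_(i <- r | P i) f i).
Proof.
elim: r => [|a r IH] h; first by rewrite big_nil.
rewrite big_cons; case: ifP => Pa.
  apply: UD; first by apply: h => //; rewrite mem_head.
  by apply: IH => i ir; apply: h; rewrite in_cons ir orbT.
by apply: IH => i ir; apply: h; rewrite in_cons ir orbT.
Qed.

Definition gcomp (s : seq (G * V)) g := \sum_(p <- s | p.1 == g) p.2.

Lemma comp_in s g : List.Forall (fun p => U p.1 p.2) s -> U g (gcomp s g).
Proof.
move/ForallP => h; apply: Usum => p ps /eqP <-; exact: h.
Qed.

Lemma sum_comp s (r : seq G) : uniq r -> {subset map fst s <= r} ->
  \sum_(p <- s) p.2 = \sum_(h <- r) gcomp s h.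
Proof.
move=> ur sr; rewrite /gcomp.
rewrite (eq_bigr (fun h => \sum_(p <- s) if p.1 == h then p.2 else 0)); last first.
  by move=> h _; rewrite big_mkcond.
rewrite exchange_big /= [LHS]big_seq [RHS]big_seq; apply: eq_bigr => p ps.
have pr : p.1 \in r by apply: sr; apply/mapP; exists p.
rewrite (bigD1_seq _ pr ur) /= eqxx big1 ?addr0 // => h /negbTE.
by rewrite eq_sym => ->.
Qed.

Lemma Forall_ord_uniq (T : eqType) (W : eqType) (f : T -> W) (r : seq T) :
  uniq r -> List.ForallOrdPairs (fun p p' => ~ p.1 = p'.1) [seq (x, f x) | x <- r].
Proof.
elim: r => [|a r IH] /=; first by constructor.
case/andP => ar ur; constructor; last exact: IH.
apply (proj2 (ForallP _ _)) => p /mapP [x xr ->] /= ax; subst; by rewrite xr in ar.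
Qed.

Lemma comp_unique s t : List.Forall (fun p => U p.1 p.2) s ->
  List.Forall (fun p => U p.1 p.2) t ->
  \sum_(p <- s) p.2 = \sum_(p <- t) p.2 -> forall g, gcomp s g = gcomp t g.
Proof.
move=> hs ht est g.
set r := undup (map fst (s ++ t)).
have ur : uniq r by exact: undup_uniq.
have sr : {subset map fst s <= r}.
  by move=> x xs; rewrite mem_undup map_cat mem_cat xs.
have tr : {subset map fst t <= r}.
  by move=> x xs; rewrite mem_undup map_cat mem_cat xs orbT.
set w := [seq (h, gcomp s h - gcomp t h) | h <- r].
case: Ud => _ [_ uq].
have := uq w.
have hw : List.Forall (fun p => True /\ U p.1 p.2) w.
  apply/ForallP => p /mapP [h hr ->] /=; split => //.
  by apply: UB; apply: comp_in.
have sw : \sum_(p <- w) p.2 = 0.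
  rewrite big_map sumrB -(sum_comp ur sr) -(sum_comp ur tr) est.
  by rewrite subrr.
move=> /(_ hw (Forall_ord_uniq _ ur) sw) /ForallP hz.
case gr: (g \in r).
  apply/eqP; rewrite -subr_eq0; apply/eqP.
  by have := hz (g, gcomp s g - gcomp t g); apply; apply/mapP; exists g.
have z : forall u, {subset map fst u <= r} -> gcomp u g = 0.
  move=> u ur'; rewrite /gcomp big_seq_cond big1 // => p /andP [ps /eqP pg].
  by move: gr; rewrite -pg (ur' _ (map_f fst ps)).
by rewrite !z.
Qed.
End Comp.

Lemma Forall_T (T : Type) (P : T -> Prop) s :
  List.Forall (fun p => True /\ P p) s -> List.Forall P s.
Proof. by apply: List.Forall_impl => p []. Qed.

Section GF.
Variables (G : zmodType) (F : comUnitRingType) (Fg : G -> F -> Prop).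
Hypothesis hF : graded_field Fg.

Lemma Fg0 g : Fg g 0. Proof. by case: hF => h _; apply: h. Qed.
Lemma FgB g a c : Fg g a -> Fg g c -> Fg g (a - c). Proof. by case: hF => _ [h _]; apply: h. Qed.
Lemma Fg1 : Fg 0 1. Proof. by case: hF => _ [_ [h _]]. Qed.
Lemma FgM g h a c : Fg g a -> Fg h c -> Fg (g + h) (a * c).
Proof. by case: hF => _ [_ [_ [hh _]]]; apply: hh. Qed.
Lemma Fd : dsum (fun _ : F => True) (fun _ : G => True) eq Fg.
Proof. by case: hF => _ [_ [_ [_ [h _]]]]. Qed.
Lemma Funit g a : Fg g a -> a != 0 -> a \is a GRing.unit.
Proof. by case: hF => _ [_ [_ [_ [_ hh]]]]; apply: hh. Qed.
Lemma FgD g a c : Fg g a -> Fg g c -> Fg g (a + c).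
Proof. exact: (UD Fg0 FgB). Qed.
Lemma Fgsum (T : eqType) (r : seq T) (P : pred T) g (f : T -> F) :
  (forall i, i \in r -> P i -> Fg g (f i)) -> Fg g (\sum_(i <- r | P i) f i).
Proof. exact: (Usum Fg0 FgB). Qed.
Lemma Fg_eq g g' a : g = g' -> Fg g a -> Fg g' a. Proof. by move=> ->. Qed.

Lemma notGF g a : Fg g a -> ~ GammaF Fg g -> a = 0.
Proof. move=> h nh; apply/eqP; apply/negP => /negP nz; apply: nh; by exists a. Qed.

Lemma hom_inv g a : Fg g a -> a \is a GRing.unit -> Fg (- g) a^-1.
Proof.
move=> ha ua.
case: Fd => _ [ex _].
have [s [hs es]] := ex a^-1 I.
move/Forall_T: hs => hs.
set s' := [seq (g + p.1, a * p.2) | p <- s].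
have hs' : List.Forall (fun p => Fg p.1 p.2) s'.
  apply/ForallP => p /mapP [p0 p0s ->] /=; apply: FgM => //.
  by move/ForallP: hs; apply.
have h1 : List.Forall (fun p => Fg p.1 p.2) [:: ((0 : G), (1 : F))].
  by constructor => //; exact: Fg1.
have e : \sum_(p <- s') p.2 = \sum_(p <- [:: ((0:G), (1:F))]) p.2.
  by rewrite big_map -mulr_sumr -es mulrV // big_seq1.
have := comp_unique Fg0 FgB Fd hs' h1 e 0.
rewrite /gcomp big_cons big_nil /= eqxx addr0 big_map /=.
under eq_bigl do rewrite addrC addr_eq0.
rewrite -mulr_sumr => e1.
have -> : a^-1 = \sum_(p <- s | p.1 == - g) p.2 by rewrite -[RHS]mul1r -(mulVr ua) -mulrA e1 mulr1.
apply: Fgsum => p ps /eqP <-; by move/ForallP: hs; apply.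
Qed.

Lemma one_neq0 : (1 : F) != 0. Proof. exact: oner_neq0. Qed.

Lemma GF0 : GammaF Fg 0. Proof. exists 1; split; [exact: Fg1 | exact: one_neq0]. Qed.
Lemma GFD g h : GammaF Fg g -> GammaF Fg h -> GammaF Fg (g + h).
Proof.
move=> [a [ha na]] [c [hc nc]]; exists (a * c); split; first exact: FgM.
have ua := Funit ha na; have uc := Funit hc nc.
apply/negP => /eqP e; have : a * c \is a GRing.unit by rewrite unitrM ua uc.
by rewrite e unitr0.
Qed.
Lemma GFN g : GammaF Fg g -> GammaF Fg (- g).
Proof.
move=> [a [ha na]]; exists a^-1; split; first by apply: hom_inv => //; exact: Funit ha na.
by rewrite invr_eq0.
Qed.
Lemma GFB g h : GammaF Fg g -> GammaF Fg h -> GammaF Fg (g - h).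
Proof. by move=> a b; apply: GFD => //; apply: GFN. Qed.
Lemma GF_eq g h : g = h -> GammaF Fg g -> GammaF Fg h. Proof. by move=> ->. Qed.

Lemma sc_refl g : same_coset Fg g g. Proof. by rewrite /same_coset subrr; exact: GF0. Qed.
Lemma sc_sym g h : same_coset Fg g h -> same_coset Fg h g.
Proof. by rewrite /same_coset => /GFN; rewrite opprB. Qed.
Lemma sc_trans g h k : same_coset Fg g h -> same_coset Fg h k -> same_coset Fg g k.
Proof.
rewrite /same_coset => a b; apply: GF_eq (GFD b a).
by rewrite addrA subrK.
Qed.
End GF.

Lemma I1 (G : zmodType) (g h e : G) : -(h - g) = -(h+e) - -(g+e).
Proof. by rewrite opprK [RHS]addrC [h + e]addrC addrKA opprB. Qed.
Lemma I2 (G : zmodType) (g e : G) : -(-(g+e) - g) - e = g *+ 2.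
Proof. by rewrite opprB opprK addrA addrK mulr2n. Qed.
Lemma I3 (G : zmodType) (g e : G) : -(g *+ 2) - e = -(g+e) - g.
Proof. by rewrite mulr2n !opprD addrAC. Qed.
Lemma I4 (G : zmodType) (g h : G) : g *+ 2 + ((h - g) + (h - g)) = h *+ 2.
Proof. by rewrite !mulr2n addrACA -addrA addrA [g + _]addrC !subrK. Qed.

Lemma I5 (G : zmodType) (i j e : G) : i + j + e = j - - (i + e).
Proof. by rewrite opprK [RHS]addrCA addrA. Qed.

Lemma I6 (G : zmodType) (a c b' d e : G) : (a - c) + (b' - d) + (c + d + e) = a + b' + e.
Proof. by rewrite [(a - c) + _]addrACA -opprD subrKA. Qed.
Lemma I7 (G : zmodType) (x e : G) : x + - (x + e) + e = 0.
Proof. by rewrite opprD addrA subrr add0r addNr. Qed.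
Lemma I8 (G : zmodType) (x e : G) : - (x + e) + x + e = 0.
Proof. by rewrite [-(x + e) + x]addrC I7. Qed.

Lemma count_split (T : Type) (a c : pred T) (s : seq T) :
  count a s = count (fun x => a x && c x) s + count (fun x => a x && ~~ c x) s.
Proof.
elim: s => [|x s IH] //=; rewrite IH; case: (a x); case: (c x) => /=.
- by rewrite add0n addnA.
- by rewrite add0n addnCA.
- by rewrite !add0n.
- by rewrite !add0n.
Qed.

Section Main.
Variables (G : zmodType) (F : comUnitRingType) (Fg : G -> F -> Prop).
Hypothesis hF : graded_field Fg.

Definition P0 : pred F := fun x => pb (Fg 0 x).

Lemma P0E x : P0 x = true <-> Fg 0 x.
Proof. exact: pbE. Qed.

Lemma P0_divring : divring_closed P0.
Proof.
split.
- by apply/P0E; exact: Fg1 hF.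
- by move=> x y /P0E hx /P0E hy; apply/P0E; exact: FgB.
- move=> x y /P0E hx /P0E hy; apply/P0E.
  have [->|nz] := eqVneq y 0.
    by rewrite invr0 mulr0; exact: Fg0.
  rewrite -[0 : G]addr0; apply: FgM => //.
  rewrite -oppr0; apply: (hom_inv hF) => //; exact: (Funit hF hy nz).
Qed.

Record F0 := MkF0 { v0 : F; _ : P0 v0 }.
HB.instance Definition _ := [isSub for v0].
HB.instance Definition _ := [Choice of F0 by <:].
HB.instance Definition _ := GRing.SubChoice_isSubComUnitRing.Build F P0 F0 P0_divring.

Lemma F0_field : GRing.field_axiom F0.
Proof.
move=> x nx; rewrite -(inj_eq val_inj) /= in nx.
exact: (Funit hF (proj1 (P0E _) (valP x)) nx).
Qed.
HB.instance Definition _ := GRing.ComUnitRing_isField.Build F0 F0_field.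

Variables (eps : G) (V : lmodType F) (Vg : G -> V -> Prop) (q : V -> F) (b : V -> V -> F).
Hypothesis heps : GammaF Fg eps.
Hypothesis hV : graded_space Fg Vg.
Hypothesis hPhi : eps_quad_space Fg Vg eps q b (fun _ => True).

Lemma Vg0 g : Vg g 0. Proof. by case: hV => h _; apply: h. Qed.
Lemma VgB g x y : Vg g x -> Vg g y -> Vg g (x - y). Proof. by case: hV => _ [h _]; apply: h. Qed.
Lemma VgZ g h a x : Fg g a -> Vg h x -> Vg (g + h) (a *: x).
Proof. by case: hV => _ [_ [hh _]]; apply: hh. Qed.
Lemma Vd : dsum (fun _ : V => True) (fun _ : G => True) eq Vg.
Proof. by case: hV => _ [_ [_ hh]]. Qed.
Lemma Vg_eq g g' x : g = g' -> Vg g x -> Vg g' x. Proof. by move=> ->. Qed.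

Lemma qZ a x : q (a *: x) = a ^+ 2 * q x.
Proof. by case: hPhi => _ [_ [h _]]; apply: h. Qed.
Lemma qdeg g x : Vg g x -> Fg (g *+ 2) (q x).
Proof. by case: hPhi => _ [_ [_ [_ [_ [h _]]]]]; apply: h. Qed.
Lemma bL a x y z : b (a *: x + y) z = a * b x z + b y z.
Proof. by case: hPhi => _ [_ [_ [_ [_ [_ [h _]]]]]]; apply: h. Qed.
Lemma bsym x y : b x y = b y x.
Proof. by case: hPhi => _ [_ [_ [_ [_ [_ [_ [h _]]]]]]]; apply: h. Qed.
Lemma bdeg g h x y : Vg g x -> Vg h y -> Fg (g + h + eps) (b x y).
Proof. by case: hPhi => _ [_ [_ [_ [_ [_ [_ [_ [hh _]]]]]]]] hx hy; apply: hh. Qed.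
Lemma bnd x : (forall y, b x y = 0) -> x = 0.
Proof. by case: hPhi => _ [_ [_ [_ [_ [_ [_ [_ [_ [hh _]]]]]]]]] hy; apply: hh => // y _. Qed.
Lemma hlam : exists lam, forall x y, polar q x y = lam * b x y.
Proof. case: hPhi => _ [_ [_ [_ [_ [_ [_ [_ [_ [_ [lam hl]]]]]]]]]]; by exists lam => x y; apply: hl. Qed.

Lemma bD1 x y z : b (x + y) z = b x z + b y z.
Proof. by rewrite -{1}[x]scale1r bL mul1r. Qed.
Lemma b0l z : b 0 z = 0.
Proof. have := bD1 0 0 z; rewrite addr0 -{1}[b 0 z]addr0 => /addrI h; by rewrite -h. Qed.
Lemma bZ1 a x z : b (a *: x) z = a * b x z.
Proof. by rewrite -[a *: x]addr0 bL b0l addr0. Qed.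
Lemma bD2 x y z : b z (x + y) = b z x + b z y.
Proof. by rewrite bsym bD1 -!(bsym z). Qed.
Lemma bZ2 a x z : b z (a *: x) = a * b z x.
Proof. by rewrite bsym bZ1 bsym. Qed.
Lemma bsuml (T : Type) (r : seq T) (P : pred T) (f : T -> V) z :
  b (\sum_(i <- r | P i) f i) z = \sum_(i <- r | P i) b (f i) z.
Proof.
elim: r => [|a r IH]; first by rewrite !big_nil b0l.
by rewrite !big_cons; case: ifP => // _; rewrite bD1 IH.
Qed.
Lemma bsumr (T : Type) (r : seq T) (P : pred T) (f : T -> V) z :
  b z (\sum_(i <- r | P i) f i) = \sum_(i <- r | P i) b z (f i).
Proof. by rewrite bsym bsuml; apply: eq_bigr => i _; rewrite bsym. Qed.

Lemma hbasis : exists e, graded_basis Vg (fun _ => True) e.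
Proof. by case: hPhi => _ [[k [e [he _]]] _]; exists e. Qed.
Definition e := proj1_sig (constructive_indefinite_description _ hbasis).
Lemma eP : graded_basis Vg (fun _ => True) e.
Proof. exact: (proj2_sig (constructive_indefinite_description _ hbasis)). Qed.
Definition n := size e.
Definition ei (i : 'I_n) := e`_i.
Lemma ei_hom (i : 'I_n) : exists g, Vg g (ei i).
Proof.
case: eP => /ForallP h _; have := h (ei i) (mem_nth 0 (ltn_ord i)); by case.
Qed.
Definition deg (i : 'I_n) : G := proj1_sig (constructive_indefinite_description _ (ei_hom i)).
Lemma degP i : Vg (deg i) (ei i).
Proof. exact: (proj2_sig (constructive_indefinite_description _ (ei_hom i))). Qed.
Lemma e_indep (c : 'I_n -> F) : \sum_(i < n) c i *: ei i = 0 -> forall i, c i = 0.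
Proof. by case: eP => _ [h _]; apply: h. Qed.
Lemma e_span x : exists c : 'I_n -> F, x = \sum_(i < n) c i *: ei i.
Proof. by case: eP => _ [_ h]; apply: h. Qed.
Definition coord x := proj1_sig (constructive_indefinite_description _ (e_span x)).
Lemma coordE x : x = \sum_(i < n) coord x i *: ei i.
Proof. exact: (proj2_sig (constructive_indefinite_description _ (e_span x))). Qed.
Lemma coord_uniq x (c : 'I_n -> F) : x = \sum_(i < n) c i *: ei i -> forall i, coord x i = c i.
Proof.
move=> ex i; apply/eqP; rewrite -subr_eq0; apply/eqP; move: i; apply: e_indep.
under eq_bigr do rewrite scalerBl.
by rewrite sumrB -coordE -ex subrr.
Qed.
Lemma coord_lin a x y i : coord (a *: x + y) i = a * coord x i + coord y i.
Proof.
apply: (coord_uniq (c := fun j => a * coord x j + coord y j)).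
rewrite [in LHS](coordE x) [in LHS](coordE y) scaler_sumr -big_split /=.
by apply: eq_bigr => j _; rewrite scalerDl scalerA.
Qed.
Lemma coord0 i : coord 0 i = 0.
Proof. by apply: (coord_uniq (c := fun _ => 0)); rewrite big1 // => j _; rewrite scale0r. Qed.
Lemma coordD x y i : coord (x + y) i = coord x i + coord y i.
Proof. by rewrite -{1}[x]scale1r coord_lin mul1r. Qed.
Lemma coordZ a x i : coord (a *: x) i = a * coord x i.
Proof. by rewrite -[a *: x]addr0 coord_lin coord0 addr0. Qed.
Lemma coordN x i : coord (- x) i = - coord x i.
Proof. by rewrite -scaleN1r coordZ mulN1r. Qed.
Lemma coordB x y i : coord (x - y) i = coord x i - coord y i.
Proof. by rewrite coordD coordN. Qed.
Lemma coord_sum (T : Type) (r : seq T) (P : pred T) (f : T -> V) i :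
  coord (\sum_(k <- r | P k) f k) i = \sum_(k <- r | P k) coord (f k) i.
Proof.
elim: r => [|a r IH]; first by rewrite !big_nil coord0.
by rewrite !big_cons; case: ifP => // _; rewrite coordD IH.
Qed.
Lemma coord_ei c j i : coord (c *: ei j) i = if i == j then c else 0.
Proof.
apply: (coord_uniq (c := fun i => if i == j then c else 0)); rewrite (bigD1 j) //= eqxx big1 ?addr0 // => k /negbTE ->.
by rewrite scale0r.
Qed.
Lemma coord_eq0 x : (forall i, coord x i = 0) -> x = 0.
Proof. by move=> h; rewrite (coordE x) big1 // => i _; rewrite h scale0r. Qed.


Lemma fdec_ex (c : F) : exists s : seq (G * F),
  List.Forall (fun p => Fg p.1 p.2) s /\ c = \sum_(p <- s) p.2.
Proof.
case: (Fd hF) => _ [ex _]; have [s [hs es]] := ex c I.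
by exists s; split => //; apply: Forall_T.
Qed.
Definition fdec c := proj1_sig (constructive_indefinite_description _ (fdec_ex c)).
Lemma fdecP c : List.Forall (fun p => Fg p.1 p.2) (fdec c) /\ c = \sum_(p <- fdec c) p.2.
Proof. exact: (proj2_sig (constructive_indefinite_description _ (fdec_ex c))). Qed.

Lemma hom_coord h y i : Vg h y -> ~ same_coset Fg (deg i) h -> coord y i = 0.
Proof.
move=> hy nsc.
set c := coord y.
set t := flatten [seq [seq (a.1 + deg j, a.2 *: ei j) | a <- fdec (c j)] | j <- index_enum 'I_n].
have ht : List.Forall (fun p => Vg p.1 p.2) t.
  apply/ForallP => p /flattenP [u /mapP [j _ ->] /mapP [a ain ->]] /=.
  apply: VgZ; last exact: degP.
  by case: (fdecP (c j)) => /ForallP hh _; apply: hh.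
have h1 : List.Forall (fun p => Vg p.1 p.2) [:: (h, y)] by constructor.
have et : \sum_(p <- t) p.2 = \sum_(p <- [:: (h, y)]) p.2.
  rewrite big_seq1 big_flatten big_map [RHS](coordE y).
  apply: eq_bigr => j _; rewrite big_map -scaler_suml.
  by case: (fdecP (c j)) => _ <-.
have := comp_unique Vg0 VgB Vd ht h1 et h.
rewrite /gcomp big_cons big_nil eqxx addr0 /= big_flatten big_map => e1.
have e2 : y = \sum_(j < n) (\sum_(a <- fdec (c j) | a.1 + deg j == h) a.2) *: ei j.
  by rewrite -e1; apply: eq_bigr => j _; rewrite big_map scaler_suml.
rewrite /c (coord_uniq e2 i) big_seq_cond big1 // => a /andP [ain /eqP ea].
have : Fg a.1 a.2 by case: (fdecP (c i)) => /ForallP hh _; apply: hh.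
have -> : a.1 = h - deg i by rewrite -ea addrK.
move=> ha; exact: (notGF ha nsc).
Qed.

Notation sc := (same_coset Fg).
Notation half := (halfGammaF Fg).
Notation gb := (gbar eps).
Notation Vc := (Vcoset Fg Vg).

Lemma half_sc g h : half g -> sc g h -> half h.
Proof.
rewrite /halfGammaF /same_coset => hg hs.
exact: GF_eq (I4 g h) (GFD hF hg (GFD hF hs hs)).
Qed.
Lemma gbar_sc g h : sc g h -> sc (gb g) (gb h).
Proof.
rewrite /same_coset /gbar => hs; exact: GF_eq (I1 g h eps) (GFN hF hs).
Qed.
Lemma gbarK g : gb (gb g) = g.
Proof. by rewrite /gbar opprD opprK addrK. Qed.
Lemma half_gbar g : sc g (gb g) <-> half g.
Proof.
rewrite /same_coset /halfGammaF /gbar; split => h.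
  exact: GF_eq (I2 g eps) (GFB hF (GFN hF h) heps).
exact: GF_eq (I3 g eps) (GFB hF (GFN hF h) heps).
Qed.
Lemma half_gbar2 g : half (gb g) <-> half g.
Proof.
rewrite -!half_gbar gbarK; split => hh; exact: (sc_sym hF hh).
Qed.

Lemma Vc0 g : Vc g 0.
Proof. by exists [::]; rewrite big_nil. Qed.
Lemma VcD g x y : Vc g x -> Vc g y -> Vc g (x + y).
Proof.
move=> [s [hs ->]] [t [ht ->]]; exists (s ++ t); split; last by rewrite big_cat.
by apply/ForallP => p; rewrite mem_cat => /orP [] pin; [move/ForallP: hs | move/ForallP: ht]; apply.
Qed.
Lemma Vcsum (T : Type) (r : seq T) (P : pred T) g (f : T -> V) :
  (forall i, P i -> Vc g (f i)) -> Vc g (\sum_(i <- r | P i) f i).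
Proof.
move=> h; elim: r => [|a r IH]; first by rewrite big_nil; exact: Vc0.
by rewrite big_cons; case: ifP => // Pa; apply: VcD => //; apply: h.
Qed.
Lemma Vc_hom g h y : Vg h y -> sc g h -> Vc g y.
Proof. by move=> hy hs; exists [:: (h, y)]; split; [constructor | rewrite big_seq1]. Qed.
Lemma Vc_cell j c : Vc (deg j) (c *: ei j).
Proof.
case: (fdecP c) => /ForallP hs ->; rewrite scaler_suml big_seq; apply: Vcsum => a ain.
have [->|nz] := eqVneq a.2 0.
  by rewrite scale0r; exact: Vc0.
apply: (Vc_hom (h := a.1 + deg j)).
  by apply: VgZ; [apply: hs | exact: degP].
rewrite /same_coset addrK; exists a.2; split => //; exact: hs.
Qed.

Lemma Vc_sc g h x : sc g h -> Vc h x -> Vc g x.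
Proof.
move=> hs [t [/ForallP ht ->]]; exists t; split => //.
apply/ForallP => p pt; have [h1 h2] := ht p pt; split => //; exact: (sc_trans hF hs h1).
Qed.

Definition Wsup (S : 'I_n -> Prop) x := forall i, ~ S i -> coord x i = 0.

Lemma Vc_iff g x : Vc g x <-> Wsup (fun i => sc g (deg i)) x.
Proof.
split.
  move=> [s [/ForallP hs ->]] i ni; rewrite coord_sum big_seq; apply: big1 => p ps.
  have [h1 h2] := hs p ps; apply: (hom_coord h2) => h3; apply: ni.
  exact: (sc_trans hF h1 (sc_sym hF h3)).
move=> hw; rewrite (coordE x) (bigID (fun i => pb (sc g (deg i)))) /=.
rewrite [X in _ + X]big1 ?addr0; last first.
  by move=> i /pbP ni; rewrite hw // scale0r.
apply: Vcsum => i /pbP hi.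
exact: (Vc_sc hi (Vc_cell i _)).
Qed.

Lemma Wsup0 S : Wsup S 0. Proof. by move=> i _; rewrite coord0. Qed.
Lemma Wsup_lin S a x y : Wsup S x -> Wsup S y -> Wsup S (a *: x + y).
Proof. by move=> hx hy i ni; rewrite coord_lin hx // hy // mulr0 addr0. Qed.
Lemma WsupD S x y : Wsup S x -> Wsup S y -> Wsup S (x + y).
Proof. by move=> hx hy; rewrite -[x]scale1r; apply: Wsup_lin. Qed.
Lemma WsupB S x y : Wsup S x -> Wsup S y -> Wsup S (x - y).
Proof. by move=> hx hy; rewrite -scaleN1r addrC; apply: Wsup_lin. Qed.
Lemma Wsup_sum S (T : Type) (r : seq T) (P : pred T) (f : T -> V) :
  (forall k, P k -> Wsup S (f k)) -> Wsup S (\sum_(k <- r | P k) f k).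
Proof.
move=> h; elim: r => [|a r IH]; first by rewrite big_nil; exact: Wsup0.
by rewrite big_cons; case: ifP => // Pa; apply: WsupD => //; apply: h.
Qed.
Lemma Wsup_mono (S S' : 'I_n -> Prop) x : (forall i, S i -> S' i) -> Wsup S x -> Wsup S' x.
Proof. by move=> hS hx i ni; apply: hx => /hS. Qed.
Lemma Wsup_cell (S : 'I_n -> Prop) j c : S j -> Wsup S (c *: ei j).
Proof. by move=> hj i ni; rewrite coord_ei; case: eqP => // e; subst. Qed.

Definition proj (S : 'I_n -> Prop) x := \sum_(i < n | pb (S i)) coord x i *: ei i.
Lemma coord_proj S x i : coord (proj S x) i = if pb (S i) then coord x i else 0.
Proof.
apply: (coord_uniq (c := fun i => if pb (S i) then coord x i else 0)).
rewrite /proj big_mkcond; apply: eq_bigr => j _; by case: ifP; rewrite ?scale0r.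
Qed.
Lemma proj_W S x : Wsup S (proj S x).
Proof. by move=> i ni; rewrite coord_proj; case: pbP. Qed.
Lemma proj_id S x : Wsup S x -> proj S x = x.
Proof.
move=> hx; rewrite [RHS]coordE (bigID (fun i => pb (S i))) /= [X in _ = _ + X]big1 ?addr0 //.
by move=> i /pbP ni; rewrite hx // scale0r.
Qed.
Lemma proj_split S x : x = proj S x + proj (fun i => ~ S i) x.
Proof.
apply/eqP; rewrite -subr_eq0; apply/eqP; apply: coord_eq0 => i.
rewrite coordD coordN coordD !coord_proj.
case: pbP => a; case: pbP => b' //; by rewrite ?addr0 ?add0r subrr.
Qed.

Lemma Wsup_list (J : G -> Prop) (S : 'I_n -> Prop) x :
  (forall i, S i -> J (deg i)) -> Wsup S x ->
  exists s : seq (G * V), List.Forall (fun p => J p.1 /\ Vc p.1 p.2) s /\ x = \sum_(p <- s) p.2.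
Proof.
move=> hJ hx.
exists [seq (deg i, coord x i *: ei i) | i <- [seq i <- index_enum 'I_n | pb (S i)]]; split.
  apply/ForallP => p /mapP [i]; rewrite mem_filter => /andP [/pbP Si _] -> /=.
  by split; [exact: hJ | exact: Vc_cell].
by rewrite big_map big_filter -{1}(proj_id hx).
Qed.


Lemma b_ee i j : ~ sc (gb (deg i)) (deg j) -> b (ei i) (ei j) = 0.
Proof.
move=> ns; have := bdeg (degP i) (degP j); rewrite I5 => h; exact: (notGF h ns).
Qed.

Lemma b_coord x y : b x y = \sum_(i < n) \sum_(j < n) coord x i * coord y j * b (ei i) (ei j).
Proof.
rewrite {1}(coordE x) bsuml; apply: eq_bigr => i _; rewrite bZ1 {1}(coordE y) bsumr mulr_sumr.
by apply: eq_bigr => j _; rewrite bZ2 mulrA.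
Qed.

Lemma orth (S T : 'I_n -> Prop) x y :
  (forall i j, S i -> T j -> ~ sc (gb (deg i)) (deg j)) -> Wsup S x -> Wsup T y -> b x y = 0.
Proof.
move=> hST hx hy; rewrite b_coord big1 // => i _; rewrite big1 // => j _.
case: (pbP (S i)) => si; last by rewrite hx // !mul0r.
case: (pbP (T j)) => tj; last by rewrite hy // mulr0 mul0r.
by rewrite b_ee ?mulr0 //; apply: hST.
Qed.

Lemma nondeg (S : 'I_n -> Prop) x :
  (forall i j, S i -> sc (gb (deg i)) (deg j) -> S j) -> Wsup S x ->
  (forall y, Wsup S y -> b x y = 0) -> x = 0.
Proof.
move=> hS hx hy; apply: bnd => z.
rewrite (@proj_split S z) bD2 (hy _ (@proj_W S z)) add0r.
apply: (orth (S := S) (T := fun i => ~ S i)) => //; last exact: proj_W.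
by move=> i j si nsj hs; apply: nsj; exact: hS hs.
Qed.

Definition idx (S : 'I_n -> Prop) := [seq i <- index_enum 'I_n | pb (S i)].
Lemma idx_uniq S : uniq (idx S).
Proof. by rewrite filter_uniq // index_enum_uniq. Qed.
Lemma mem_idx S i : (i \in idx S) = pb (S i).
Proof. by rewrite mem_filter mem_index_enum andbT. Qed.

Lemma Wsup_graded S : graded_subspace Vg (Wsup S).
Proof.
split; first exact: Wsup0.
split; first by move=> a x y; apply: Wsup_lin.
move=> x hx.
exists (flatten [seq [seq (a.1 + deg i, a.2 *: ei i) | a <- fdec (coord x i)] | i <- idx S]).
split.
  apply/ForallP => p /flattenP [u /mapP [i]]; rewrite mem_idx => /pbP si -> /mapP [a ain ->] /=.
  split; last exact: Wsup_cell.
  apply: VgZ; last exact: degP.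
  by case: (fdecP (coord x i)) => /ForallP hh _; apply: hh.
rewrite big_flatten big_map /idx big_filter -{1}(proj_id hx) /proj; apply: eq_bigr => i _.
rewrite big_map -scaler_suml; by case: (fdecP (coord x i)) => _ <-.
Qed.

Lemma Wsup_dim S : has_dim Vg (Wsup S) (size (idx S)).
Proof.
exists [seq ei i | i <- idx S]; split; last by rewrite size_map.
have [n0|npos] := posnP n.
  have e0 : idx S = [::].
    have : forall i : 'I_n, False by move=> i; have := ltn_ord i; move: (nat_of_ord i); rewrite n0.
    by case: (idx S) => // i _ /(_ i).
  rewrite e0; split; first by constructor.
  split; first by move=> c _ [].
  move=> x hx; exists (fun _ => 0); rewrite big_ord0 -(proj_id hx) /proj.
  by rewrite -big_filter -/(idx S) e0 big_nil.
set i0 := Ordinal npos.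
split.
  apply/ForallP => y /mapP [i]; rewrite mem_idx => /pbP si ->; split; last by rewrite -[ei i]scale1r; exact: Wsup_cell.
  by exists (deg i); exact: degP.
set I := idx S.
have nthI : forall m, (m < size I)%N -> nth 0 [seq ei i | i <- I] m = ei (nth i0 I m).
  by move=> m hm; rewrite (nth_map i0).
split.
  move=> c hc.
  pose c' i := \sum_(k < size [seq ei i | i <- I] | nth i0 I k == i) c k.
  have ec : \sum_(i < n) c' i *: ei i = 0.
    rewrite -[RHS]hc; under eq_bigr do rewrite scaler_suml big_mkcond.
    rewrite exchange_big /=; apply: eq_bigr => k _.
    rewrite -big_mkcond /= (big_pred1 (nth i0 I k)); last by move=> i; rewrite eq_sym.
    by rewrite nthI // -(size_map ei); exact: ltn_ord.
  move=> k; have := e_indep ec (nth i0 I k); rewrite /c' (big_pred1 k) //.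
  move=> k' /=; rewrite nth_uniq ?idx_uniq //.
  - by rewrite -(size_map ei); exact: ltn_ord.
  - by rewrite -(size_map ei); exact: ltn_ord.
move=> x hx; exists (fun k => coord x (nth i0 I k)).
have ex : x = \sum_(i <- I) coord x i *: ei i.
  by rewrite -{1}(proj_id hx) /proj /I /idx big_filter.
rewrite {1}ex (big_nth i0).
rewrite -(big_mkord xpredT (fun m => coord x (nth i0 I m) *: nth 0 [seq ei i | i <- I] m)) size_map.
rewrite [LHS]big_nat_cond [RHS]big_nat_cond; apply: eq_bigr => m /andP [/andP [_ hm] _].
by rewrite nthI.
Qed.

Lemma val_F0_sum (T : Type) (r : seq T) (f : T -> F0) :
  (val : F0 -> F) (\sum_(k <- r) f k) = \sum_(k <- r) (val : F0 -> F) (f k).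
Proof. by rewrite rmorph_sum. Qed.
Lemma val_F0_mul (x y : F0) : (val : F0 -> F) (x * y) = (val : F0 -> F) x * (val : F0 -> F) y.
Proof. by rewrite rmorphM. Qed.
Lemma val_F0_eq0 (x : F0) : (val : F0 -> F) x = 0 -> x = 0.
Proof. by move=> h; apply: val_inj; rewrite h rmorph0. Qed.
Lemma insubdF0 y : Fg 0 y -> (val : F0 -> F) (insubd (0 : F0) y) = y.
Proof. by move=> h; rewrite insubdK //; apply/P0E. Qed.

Lemma unit_cancel (x c : F) : c \is a GRing.unit -> x * c = 0 -> x = 0.
Proof. by move=> uc h; rewrite -[x]mulr1 -(mulrV uc) mulrA h mul0r. Qed.

Lemma rank_le (X Y : 'I_n -> Prop) (u : 'I_n -> F) :
  (forall i j, X i -> ~ Y j -> b (ei i) (ei j) = 0) ->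
  (forall i, u i \is a GRing.unit) ->
  (forall i j, X i -> Y j -> Fg 0 (u i * u j * b (ei i) (ei j))) ->
  (size (idx X) <= size (idx Y))%N.
Proof.
move=> hXY hu hF0.
set IX := idx X; set IY := idx Y.
case e: IX => [|i0 t]; first by [].
rewrite -e.
set kx := size IX; set ky := size IY.
have inX : forall k : 'I_kx, X (nth i0 IX k).
  by move=> k; apply/pbP; rewrite -mem_idx -/IX mem_nth.
have inY : forall l : 'I_ky, Y (nth i0 IY l).
  by move=> l; apply/pbP; rewrite -mem_idx -/IY mem_nth.
pose M : 'M[F0]_(kx, ky) := \matrix_(k, l) insubd (0 : F0)
   (u (nth i0 IX k) * u (nth i0 IY l) * b (ei (nth i0 IX k)) (ei (nth i0 IY l))).
have ME : forall k l, (val : F0 -> F) (M k l) =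
    u (nth i0 IX k) * u (nth i0 IY l) * b (ei (nth i0 IX k)) (ei (nth i0 IY l)).
  by move=> k l; rewrite mxE insubdF0 //; apply: hF0.
have key : forall w : 'rV[F0]_kx, w *m M = 0 -> w = 0.
  move=> w hw.
  set z := \sum_(k < kx) ((val : F0 -> F) (w 0 k) * u (nth i0 IX k)) *: ei (nth i0 IX k).
  have bz : forall j, b z (ei j) = 0.
    move=> j; case: (pbP (Y j)) => yj; last first.
      rewrite /z bsuml big1 // => k _; rewrite bZ1 hXY ?mulr0 //; exact: inX.
    have jIY : j \in IY by rewrite mem_idx; apply/pbP.
    have hl : (index j IY < ky)%N by rewrite index_mem.
    have ej : nth i0 IY (Ordinal hl) = j by rewrite /= nth_index.
    apply: (unit_cancel (hu j)); rewrite mulrC.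
    have := congr1 (fun m : 'M[F0]_(1, ky) => (val : F0 -> F) (m 0 (Ordinal hl))) hw.
    rewrite !mxE val_F0_sum rmorph0 => <-.
    rewrite /z bsuml mulr_sumr; apply: eq_bigr => k _.
    rewrite val_F0_mul ME ej bZ1; ring.
  have z0 : z = 0.
    apply: bnd => y; rewrite {1}(coordE y) bsumr big1 // => j _; by rewrite bZ2 bz mulr0.
  apply/rowP => k; rewrite mxE; apply: val_F0_eq0.
  have := coord0 (nth i0 IX k); rewrite -z0 /z coord_sum (bigD1 k) //= coord_ei eqxx.
  rewrite big1 ?addr0; first by apply: unit_cancel.
  move=> k' nk; rewrite coord_ei; case: eqP => // hk; exfalso; move/negP: nk; apply.
  apply/eqP/val_inj; apply/eqP; rewrite -(nth_uniq i0 _ _ (idx_uniq X)) ?hk //; exact: ltn_ord.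
have rf : row_free M.
  rewrite -kermx_eq0; apply/eqP/row_matrixP => r; rewrite row0; apply: key.
  by rewrite -row_mul mulmx_ker row0.
by have := rank_leq_col M; move/eqP: rf => ->.
Qed.

Definition Orb g k := sc g k \/ sc (gb g) k.
Lemma gbar_sc' g h : sc (gb g) h -> sc g (gb h).
Proof. by move/gbar_sc; rewrite gbarK. Qed.
Lemma Orb_refl g : Orb g g. Proof. by left; exact: sc_refl. Qed.
Lemma Orb_gb g : Orb g (gb g). Proof. by right; exact: sc_refl. Qed.
Lemma Orb_sym g k : Orb g k -> Orb k g.
Proof.
case=> h; [left; exact: (sc_sym hF h)|right].
by apply: (sc_sym hF); apply: gbar_sc'.
Qed.
Lemma Orb_trans g k m : Orb g k -> Orb k m -> Orb g m.
Proof.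
case=> h1 [] h2.
- by left; exact: (sc_trans hF h1 h2).
- by right; exact: (sc_trans hF (gbar_sc h1) h2).
- by right; exact: (sc_trans hF h1 h2).
- left; exact: (sc_trans hF (gbar_sc' h1) h2).
Qed.
Lemma Orb_sc g k m : Orb g k -> sc k m -> Orb g m.
Proof. by move=> h1 h2; apply: (Orb_trans h1); left. Qed.

Lemma pred_eq (T : Type) (P Q : T -> Prop) : (forall x, P x <-> Q x) -> P = Q.
Proof. by move=> h; apply: functional_extensionality => x; apply: propositional_extensionality. Qed.

Definition rho (g : G) : G := epsilon (inhabits (0 : G)) (sc g).
Lemma rho_sc g : sc g (rho g).
Proof. by apply: (epsilon_spec (inhabits 0) (sc g)); exists g; exact: sc_refl. Qed.
Lemma rho_eq g h : sc g h -> rho g = rho h.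
Proof.
move=> hs; rewrite /rho; congr epsilon; apply: pred_eq => k; split => hk.
  exact: (sc_trans hF (sc_sym hF hs) hk).
exact: (sc_trans hF hs hk).
Qed.

Definition rr (g : G) : G := epsilon (inhabits (0 : G)) (Orb g).
Lemma rr_O g : Orb g (rr g).
Proof. by apply: (epsilon_spec (inhabits 0) (Orb g)); exists g; exact: Orb_refl. Qed.
Lemma rr_eq g h : Orb g h -> rr g = rr h.
Proof.
move=> hs; rewrite /rr; congr epsilon; apply: pred_eq => k; split => hk.
  exact: (Orb_trans (Orb_sym hs) hk).
exact: (Orb_trans hs hk).
Qed.
Definition sel (g : G) : bool := pb (sc (rr g) g).
Lemma sel_sc g h : sc g h -> sel g = sel h.
Proof.
move=> hs; rewrite /sel (@rr_eq g h); last by left.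
apply/pbP/pbP => hk; [exact: (sc_trans hF hk hs) | exact: (sc_trans hF hk (sc_sym hF hs))].
Qed.
Lemma sel_gb g : ~ half g -> sel (gb g) = ~~ sel g.
Proof.
move=> nh; rewrite /sel -(@rr_eq g (gb g)); last exact: Orb_gb.
have := rr_O g; case: (pbP (sc (rr g) g)) => h1; case: (pbP (sc (rr g) (gb g))) => h2 //= ho.
- exfalso; apply: nh; apply/half_gbar; exact: (sc_trans hF (sc_sym hF h1) h2).
- exfalso; case: ho => h3; [apply: h1 | apply: h2]; exact: (sc_sym hF h3).
Qed.

Lemma half_sc' g h : ~ half g -> sc h g -> ~ half h.
Proof. by move=> nh hs hh; apply: nh; exact: (half_sc hh hs). Qed.

Definition Hset x := exists s : seq (G * V),
  List.Forall (fun p => half p.1 /\ Vc p.1 p.2) s /\ x = \sum_(p <- s) p.2.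
Definition Psiset x := exists s : seq (G * V),
  List.Forall (fun p => ~ half p.1 /\ Vc p.1 p.2) s /\ x = \sum_(p <- s) p.2.
Definition VPset g x := exists y z, Vc g y /\ Vc (gb g) z /\ x = y + z.

Lemma Vc_W g : Vc g = Wsup (fun i => sc g (deg i)).
Proof. apply: pred_eq => x; exact: Vc_iff. Qed.

Lemma list_W (J : G -> Prop) (S : 'I_n -> Prop) (s : seq (G * V)) :
  (forall g i, J g -> sc g (deg i) -> S i) ->
  List.Forall (fun p => J p.1 /\ Vc p.1 p.2) s -> Wsup S (\sum_(p <- s) p.2).
Proof.
move=> hJ /ForallP hs; rewrite big_seq; apply: Wsup_sum => p ps.
have [h1 h2] := hs p ps; move/Vc_iff: h2; apply: Wsup_mono => i; exact: hJ.
Qed.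

Lemma H_W : Hset = Wsup (fun i => half (deg i)).
Proof.
apply: pred_eq => x; split.
  by case=> s [hs ->]; apply: (list_W (J := half)) => // g i hg hs'; exact: half_sc hg hs'.
by move=> hx; apply: (Wsup_list (J := half) (S := fun i => half (deg i)) _ hx).
Qed.
Lemma Psi_W : Psiset = Wsup (fun i => ~ half (deg i)).
Proof.
apply: pred_eq => x; split.
  case=> s [hs ->]; apply: (list_W (J := fun g => ~ half g)) => // g i hg hs'.
  exact: half_sc' hg (sc_sym hF hs').
by move=> hx; apply: (Wsup_list (J := fun g => ~ half g) (S := fun i => ~ half (deg i)) _ hx).
Qed.
Lemma VP_W g : VPset g = Wsup (fun i => Orb g (deg i)).
Proof.
apply: pred_eq => x; split.
  case=> y [z [/Vc_iff hy [/Vc_iff hz ->]]]; apply: WsupD.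
    by move: hy; apply: Wsup_mono => i h; left.
  by move: hz; apply: Wsup_mono => i h; right.
move=> hx; exists (proj (fun i => sc g (deg i)) x), (x - proj (fun i => sc g (deg i)) x).
split; first by apply/Vc_iff; exact: proj_W.
split; last by rewrite addrC subrK.
apply/Vc_iff => i ni; rewrite coordB coord_proj; case: pbP => hi; first by rewrite subrr.
rewrite subr0; apply: hx; by case.
Qed.

Lemma Forall_and2 (T : Type) (P Q : T -> Prop) s :
  List.Forall P s -> List.Forall Q s -> List.Forall (fun x => P x /\ Q x) s.
Proof. elim=> [|a l ha hl IH] hq; first by constructor. inversion hq; subst; constructor; auto. Qed.
Lemma sum_Forall0 (T : Type) (f : T -> F) s :
  List.Forall (fun p => f p = 0) s -> \sum_(p <- s) f p = 0.
Proof. elim=> [|a l ha hl IH]; first by rewrite big_nil. by rewrite big_cons ha IH addr0. Qed.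

Lemma dsum_uniq (I : Type) (J : I -> Prop) (same : I -> I -> Prop) (S : I -> 'I_n -> Prop)
    (s : seq (I * V)) :
  (forall i i' j, J i -> J i' -> S i j -> S i' j -> same i i') ->
  List.Forall (fun p => J p.1 /\ Wsup (S p.1) p.2) s ->
  List.ForallOrdPairs (fun p p' => ~ same p.1 p'.1) s ->
  \sum_(p <- s) p.2 = 0 -> List.Forall (fun p => p.2 = 0) s.
Proof.
move=> hov hs hp hsum.
have key : forall j, List.Forall (fun p => coord p.2 j = 0) s.
  move=> j; have : \sum_(p <- s) coord p.2 j = 0 by rewrite -coord_sum hsum coord0.
  elim: s hs hp {hsum} => [|p s IH] hs hp hz; first by constructor.
  inversion hs as [|? ? [Jp Wp] hs']; subst. inversion hp as [|? ? hhd hp']; subst.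
  rewrite big_cons in hz.
  case: (pbP (S p.1 j)) => sj.
  - have hz' : List.Forall (fun p' => coord p'.2 j = 0) s.
      apply: List.Forall_impl (Forall_and2 hhd hs') => p' [ns [Jp' Wp']].
      by apply: Wp' => sj'; apply: ns; exact: hov Jp Jp' sj sj'.
    rewrite (sum_Forall0 hz') addr0 in hz; by constructor.
  - rewrite Wp // add0r in hz; constructor; [exact: Wp | exact: (IH hs' hp' hz)].
apply (proj2 (List.Forall_forall _ _)) => p pin; apply: coord_eq0 => j.
exact: (proj1 (List.Forall_forall _ _) (key j) p pin).
Qed.

Lemma eqs_Wsup (S : 'I_n -> Prop) :
  (forall i j, S i -> sc (gb (deg i)) (deg j) -> S j) -> eps_quad_space Fg Vg eps q b (Wsup S).
Proof.
move=> hS.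
case: hPhi => _ [_ [h3 [h4 [h5 [h6 [h7 [h8 [h9 [_ [lam h11]]]]]]]]]].
split; first exact: Wsup_graded.
split; first by exists (size (idx S)); exact: Wsup_dim.
split; first by move=> *; apply: h3.
split; first by move=> *; apply: h4.
split; first by move=> *; apply: h5.
split; first by move=> *; apply: h6.
split; first by move=> *; apply: h7.
split; first by move=> *; apply: h8.
split; first by move=> *; apply: h9.
split; first by move=> x hx hy; exact: (nondeg hS hx hy).
by exists lam => *; apply: h11.
Qed.

Lemma of_type_sub (T : qtype F) (W : V -> Prop) :
  of_type eps q b T (fun _ => True) -> of_type eps q b T W.
Proof.
case: T => /=.
- case=> [[e0 hb]|h0]; [left; split => // x y _ _; exact: hb | right => x _; exact: h0].
- by case=> h1 h2; split => *; [apply: h1 | apply: h2].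
- by move=> tau h x _; apply: h.
Qed.

Definition NH i := ~ half (deg i).
Definition Aset i := ~ half (deg i) /\ sel (deg i).
Definition Bset i := ~ half (deg i) /\ ~~ sel (deg i).
Definition tau i := if sel (deg i) then rho (deg i) else gb (rho (gb (deg i))).
Lemma tau_sc i : sc (deg i) (tau i).
Proof.
rewrite /tau; case: ifP => _; first exact: rho_sc.
rewrite -{1}[deg i]gbarK; apply: gbar_sc; exact: rho_sc.
Qed.
Definition uu i := proj1_sig (constructive_indefinite_description _ (tau_sc i)).
Lemma uuP i : Fg (tau i - deg i) (uu i) /\ uu i != 0.
Proof. exact: (proj2_sig (constructive_indefinite_description _ (tau_sc i))). Qed.
Lemma uu_unit i : uu i \is a GRing.unit.
Proof. by case: (uuP i) => h1 h2; exact: (Funit hF h1 h2). Qed.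

Lemma Fg_prod i j : tau i + tau j + eps = 0 -> Fg 0 (uu i * uu j * b (ei i) (ei j)).
Proof.
move=> ht; rewrite -ht -(I6 (tau i) (deg i) (tau j) (deg j) eps).
apply: (FgM hF); first by apply: (FgM hF); [exact: (proj1 (uuP i)) | exact: (proj1 (uuP j))].
exact: bdeg (degP i) (degP j).
Qed.

Lemma b_ne i j : b (ei i) (ei j) != 0 -> sc (gb (deg i)) (deg j).
Proof. by move=> nz; case: (pbP (sc (gb (deg i)) (deg j))) => // h; rewrite b_ee ?eqxx in nz. Qed.

Lemma sel_gb_sc i j : ~ half (deg i) -> sc (gb (deg i)) (deg j) -> sel (deg j) = ~~ sel (deg i).
Proof. by move=> nh hs; rewrite -(sel_sc hs) sel_gb. Qed.
Lemma nh_gb_sc i j : ~ half (deg i) -> sc (gb (deg i)) (deg j) -> ~ half (deg j).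
Proof. by move=> nh hs; apply: (half_sc' _ (sc_sym hF hs)) => /half_gbar2. Qed.

Lemma AB_le : (size (idx Aset) <= size (idx Bset))%N.
Proof.
apply: (rank_le (u := uu)); last 2 first.
- exact: uu_unit.
- move=> i j [nhi si] [nhj sj].
  have [->|nz] := eqVneq (b (ei i) (ei j)) 0; first by rewrite mulr0; exact: Fg0.
  have hs := b_ne nz; apply: Fg_prod; rewrite /tau si (negbTE sj).
  by rewrite -(rho_eq (gbar_sc' hs)); exact: I7.
move=> i j [nhi si] nb; apply/eqP; apply/negP => /negP nz; apply: nb.
have hs := b_ne nz; split; first exact: nh_gb_sc nhi hs.
by rewrite (sel_gb_sc nhi hs) si.
Qed.

Lemma BA_le : (size (idx Bset) <= size (idx Aset))%N.
Proof.
apply: (rank_le (u := uu)); last 2 first.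
- exact: uu_unit.
- move=> i j [nhi si] [nhj sj].
  have [->|nz] := eqVneq (b (ei i) (ei j)) 0; first by rewrite mulr0; exact: Fg0.
  have hs := b_ne nz; apply: Fg_prod; rewrite /tau sj (negbTE si).
  by rewrite (rho_eq hs); exact: I8.
move=> i j [nhi si] na; apply/eqP; apply/negP => /negP nz; apply: na.
have hs := b_ne nz; split; first exact: nh_gb_sc nhi hs.
by rewrite (sel_gb_sc nhi hs) (negbTE si).
Qed.

Lemma size_idx (P : 'I_n -> Prop) : size (idx P) = count (fun i => pb (P i)) (index_enum 'I_n).
Proof. by rewrite /idx size_filter. Qed.

Lemma NH_count : size (idx NH) = (size (idx Aset) * 2)%N.
Proof.
have e : size (idx Aset) = size (idx Bset) by apply/eqP; rewrite eqn_leq AB_le BA_le.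
rewrite muln2 -addnn {2}e !size_idx (count_split _ (fun i => sel (deg i))); congr (_ + _).
  apply: eq_count => i /=; apply/idP/pbP; first by case/andP => /pbP ? ?; split.
  by case=> ? ?; apply/andP; split => //; apply/pbP.
apply: eq_count => i /=; apply/idP/pbP; first by case/andP => /pbP ? ?; split.
by case=> ? ?; apply/andP; split => //; apply/pbP.
Qed.

Lemma q0 : q 0 = 0.
Proof. by have := qZ 0 0; rewrite scale0r expr0n /= mul0r. Qed.

Lemma A_orth i j : Aset i -> Aset j -> ~ sc (gb (deg i)) (deg j).
Proof. move=> [nhi si] [nhj sj] hs; by move: sj; rewrite (sel_gb_sc nhi hs) si. Qed.

Lemma q_sum (r : seq 'I_n) (c : 'I_n -> F) :
  (forall i, i \in r -> Aset i) -> q (\sum_(i <- r) c i *: ei i) = 0.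
Proof.
have [lam hl] := hlam.
elim: r => [|i r IH] hr; first by rewrite big_nil q0.
rewrite big_cons.
set x := c i *: ei i; set y := \sum_(j <- r) c j *: ei j.
have ai : Aset i by apply: hr; rewrite mem_head.
have hq : q (x + y) = polar q x y + q x + q y by rewrite /polar addrAC !subrK.
rewrite hq hl IH; last by move=> j jr; apply: hr; rewrite in_cons jr orbT.
have -> : b x y = 0.
  apply: (orth (S := Aset) (T := Aset)); first exact: A_orth.
    exact: Wsup_cell.
  rewrite /y big_seq; apply: Wsup_sum => j jr; apply: Wsup_cell; apply: hr.
  by rewrite in_cons jr orbT.
rewrite /x qZ (notGF (qdeg (degP i))) ?mulr0 ?addr0 //.
by case: ai.
Qed.

Lemma metabolic_NH : metabolic Vg q b (Wsup NH).
Proof.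
exists (Wsup Aset); split; first exact: Wsup_graded.
split; first by move=> x; apply: Wsup_mono => i [].
split; first by exists (size (idx NH)), (size (idx Aset)); split; [exact: Wsup_dim | split; [exact: Wsup_dim | by rewrite NH_count]].
split.
  move=> x hx; rewrite -(proj_id hx) /proj -big_filter -/(idx Aset).
  by apply: q_sum => i; rewrite mem_idx => /pbP.
move=> x y hx hy; exact: (orth A_orth hx hy).
Qed.

Lemma main_part (T : qtype F) (hT : of_type eps q b T (fun _ => True)) :
  let half := halfGammaF Fg in
  let Vc := Vcoset Fg Vg in
  let H := fun x : V => exists s : seq (G * V),
       List.Forall (fun p => half p.1 /\ Vc p.1 p.2) s /\ x = \sum_(p <- s) p.2 in
  let Psi := fun x : V => exists s : seq (G * V),
       List.Forall (fun p => ~ half p.1 /\ Vc p.1 p.2) s /\ x = \sum_(p <- s) p.2 in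
  let VP := fun (g : G) (x : V) => exists y z,
       Vc g y /\ Vc (gbar eps g) z /\ x = y + z in
  let sameP := fun g h : G => same_coset Fg g h \/ same_coset Fg (gbar eps g) h in
  orth_sum b (fun _ => True) (fun _ : bool => True) eq
           (fun t : bool => if t then H else Psi) /\
  orth_sum b H half (same_coset Fg) Vc /\
  orth_sum b Psi (fun g => ~ half g) sameP VP /\
  (forall g, half g ->
     eps_quad_space Fg Vg eps q b (Vc g) /\ of_type eps q b T (Vc g)) /\
  eps_quad_space Fg Vg eps q b Psi /\ of_type eps q b T Psi /\
  metabolic Vg q b Psi.
Proof.
move=> hf vc H Psi VP sameP.
have eH : H = Wsup (fun i => half (deg i)) by exact: H_W.
have ePsi : Psi = Wsup NH by exact: Psi_W.
have eVP : forall g, VP g = Wsup (fun i => Orb g (deg i)) by move=> g; exact: VP_W.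
have eVc : forall g, vc g = Wsup (fun i => sc g (deg i)) by move=> g; exact: Vc_W.
split.
  split.
    split; first by [].
    split.
      move=> x _; exists [:: (true, proj (fun i => half (deg i)) x); (false, proj NH x)]; split.
        constructor; first by split => //=; rewrite eH; exact: proj_W.
        constructor; first by split => //=; rewrite ePsi; exact: proj_W.
        by constructor.
      rewrite big_cons big_cons big_nil addr0 /=; exact: (@proj_split (fun i => half (deg i)) x).
    move=> s hs hp hz.
    apply: (dsum_uniq (J := fun _ => True) (S := fun t : bool => if t then (fun i => half (deg i)) else NH) _ _ hp hz).
      by move=> [] [] j _ _ /= h1 h2.
    apply: List.Forall_impl hs => -[t x] /= [_ hx]; split => //.
    by case: t hx => hx; [rewrite eH in hx | rewrite ePsi in hx].
  move=> [] [] x y _ _ //= _; rewrite ?eH ?ePsi => hx hy.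
    apply: (orth _ hx hy) => i j hi nj hs; apply: nj.
    by apply: (half_sc _ hs); apply/half_gbar2.
  apply: (orth _ hx hy) => i j ni hj hs; exact: (nh_gb_sc ni hs).
split.
  split.
    split; first by move=> g x hg hx; exists [:: (g, x)]; split; [constructor | rewrite big_seq1].
    split; first by move=> x hx; exact: hx.
    move=> s hs hp hz.
    apply: (dsum_uniq (J := hf) (S := fun g i => sc g (deg i)) _ _ hp hz).
      by move=> g g' j _ _ h1 h2; exact: (sc_trans hF h1 (sc_sym hF h2)).
    by apply: List.Forall_impl hs => p [h1 h2]; split => //; rewrite eVc in h2.
  move=> g h x y hg hh ngh; rewrite !eVc => hx hy.
  apply: (orth _ hx hy) => i j h1 h2 h3; apply: ngh.
  have a1 : sc g (gb g) by apply/half_gbar.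
  have a2 : sc (gb g) (gb (deg i)) by exact: gbar_sc.
  exact: (sc_trans hF (sc_trans hF (sc_trans hF a1 a2) h3) (sc_sym hF h2)).
split.
  split.
    split.
      move=> g x ng; rewrite eVP ePsi; apply: Wsup_mono => i [] hs hi.
        by apply: ng; apply: (half_sc hi); exact: (sc_sym hF hs).
      by apply: ng; apply/half_gbar2; apply: (half_sc hi); exact: (sc_sym hF hs).
    split.
      move=> x [s [hs ->]]; exists s; split => //; apply: List.Forall_impl hs => p [h1 h2].
      split => //; exists p.2, 0; split => //; split; [exact: Vc0 | by rewrite addr0].
    move=> s hs hp hz.
    apply: (dsum_uniq (J := fun g => ~ hf g) (S := fun g i => Orb g (deg i)) _ _ hp hz).
      by move=> g g' j _ _ h1 h2; exact: (Orb_trans h1 (Orb_sym h2)).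
    by apply: List.Forall_impl hs => p [h1 h2]; split => //; rewrite eVP in h2.
  move=> g h x y hg hh ngh; rewrite !eVP => hx hy.
  apply: (orth _ hx hy) => i j h1 h2 h3; apply: ngh.
  have a1 : Orb g (deg j) by apply: (Orb_sc _ h3); apply: (Orb_trans h1); exact: Orb_gb.
  exact: (Orb_trans a1 (Orb_sym h2)).
split.
  move=> g hg; rewrite eVc; split; last exact: of_type_sub.
  apply: eqs_Wsup => i j h1 h2.
  have a1 : sc g (gb g) by apply/half_gbar.
  exact: (sc_trans hF (sc_trans hF a1 (gbar_sc h1)) h2).
split; first by rewrite ePsi; apply: eqs_Wsup => i j h1 h2; exact: nh_gb_sc h1 h2.
split; first exact: of_type_sub.
rewrite ePsi; exact: metabolic_NH.
Qed.

End Main.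

Theorem proposition3p4
  (G : zmodType) (hG : divisible_torsion_free G)
  (F : comUnitRingType) (Fg : G -> F -> Prop) (hF : graded_field Fg)
  (eps : G) (heps : GammaF Fg eps)
  (V : lmodType F) (Vg : G -> V -> Prop) (hV : graded_space Fg Vg)
  (q : V -> F) (b : V -> V -> F)
  (hPhi : eps_quad_space Fg Vg eps q b (fun _ => True))
  (T : qtype F)
  (htau : match T with TypeIII tau => Fg eps tau /\ tau != 0 | _ => True end)
  (hT : of_type eps q b T (fun _ => True)) :
  let half := halfGammaF Fg in
  let Vc := Vcoset Fg Vg in
  (* the orthogonal sum of the Phi_Lambda, Lambda in 1/2 Gamma_F / Gamma_F *)
  let H := fun x : V => exists s : seq (G * V),
       List.Forall (fun p => half p.1 /\ Vc p.1 p.2) s /\ x = \sum_(p <- s) p.2 in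
  (* the underlying space of Psi *)
  let Psi := fun x : V => exists s : seq (G * V),
       List.Forall (fun p => ~ half p.1 /\ Vc p.1 p.2) s /\ x = \sum_(p <- s) p.2 in
  (* V_Lambda + V_{Lambda-bar}, Lambda = [g] *)
  let VP := fun (g : G) (x : V) => exists y z,
       Vc g y /\ Vc (gbar eps g) z /\ x = y + z in
  (* [g] and [h] lie in the same orbit {Lambda, Lambda-bar} *)
  let sameP := fun g h : G => same_coset Fg g h \/ same_coset Fg (gbar eps g) h in
  orth_sum b (fun _ => True) (fun _ : bool => True) eq
           (fun t : bool => if t then H else Psi) /\
  orth_sum b H half (same_coset Fg) Vc /\
  orth_sum b Psi (fun g => ~ half g) sameP VP /\
  (forall g, half g ->
     eps_quad_space Fg Vg eps q b (Vc g) /\ of_type eps q b T (Vc g)) /\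
  eps_quad_space Fg Vg eps q b Psi /\ of_type eps q b T Psi /\
  metabolic Vg q b Psi.
Proof.
exact: (main_part hF heps hV hPhi hT).
Qed.
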